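(* Let $G$ be a connected graph and $G_{\lambda,k}$ a skeleton of it. The natural map $f:G\to G_{\lambda,k}$ is a quasi-isometry if and only if the blocks are uniformly bounded (i.e. there is a uniform bound on their diameters in $G$).
   Context: $d$ is the graph metric. A set $X$ of vertices is $k$-connected if any two of its points are joined by a finite sequence in $X$ with consecutive distances $\le k$. Skeleton $G_{\lambda,k}$ (root $x_0\in V(G)$, scale $\lambda\ge1$, connectivity $k\ge1$): layers $A_{N,\lambda}=\{x: N\lambda<d(x,x_0)\le(N+1)\lambda\}$, $N\in\mathbb Z$; blocks are the maximal $k$-connected subsets of layers; $G_{\lambda,k}$ has a vertex per block and an edge between two blocks iff an edge of $G$ joins a vertex of one to a vertex of the other. The natural map $f$ sends each vertex to its block. $f$ is a quasi-isometry if there are constants $a\ge1,b\ge0$ with $\frac1a d(x,y)-b\le d(f(x),f(y))\le a d(x,y)+b$ and a quasi-isometric embedding in the other direction exists. *)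

(* Defs.v *)
From Stdlib Require Import Reals Lra Lia ZArith ClassicalEpsilon.
Open Scope R_scope.

Section Graphs.
Context {T : Type} (adj : T -> T -> Prop).

Inductive walk : nat -> T -> T -> Prop :=
| walk0 x : walk 0 x x
| walkS n x z y : adj x z -> walk n z y -> walk (S n) x y.

Definition connected_graph : Prop := forall x y : T, exists n, walk n x y.

(* graph metric: the least length of a walk from x to y (well defined when
   x and y lie in the same component, in particular in a connected graph) *)
Definition gdist (x y : T) : nat :=
  epsilon (inhabits 0%nat)
    (fun n => walk n x y /\ forall m, walk m x y -> (n <= m)%nat).
End Graphs.

Section Skeleton.
Context {V : Type} (adj : V -> V -> Prop) (x0 : V) (lam : R) (k : nat).

Let d := gdist adj.

Definition layer (N : Z) (x : V) : Prop :=
  IZR N * lam < INR (d x x0) <= (IZR N + 1) * lam.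

Inductive kchain (X : V -> Prop) : V -> V -> Prop :=
| kchain0 x : X x -> kchain X x x
| kchainS x z y : X x -> X z -> (d x z <= k)%nat -> kchain X z y -> kchain X x y.

Definition k_connected (X : V -> Prop) : Prop :=
  forall x y, X x -> X y -> kchain X x y.

Definition is_block (B : V -> Prop) : Prop :=
  (exists x, B x) /\
  exists N : Z,
    (forall x, B x -> layer N x) /\ k_connected B /\
    (forall Y : V -> Prop,
        (forall x, B x -> Y x) -> (forall x, Y x -> layer N x) ->
        k_connected Y -> forall x, Y x -> B x).

(* skeleton graph G_{lambda,k}: vertices are the blocks (sets of vertices
   of G, compared extensionally), two distinct blocks adjacent iff an edge
   of G joins them.  Non-blocks are isolated and never used. *)
Definition skel_adj (B B' : V -> Prop) : Prop :=
  is_block B /\ is_block B' /\ B <> B' /\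
  exists x y, B x /\ B' y /\ adj x y.

Definition skel_dist (B B' : V -> Prop) : nat := gdist skel_adj B B'.

Definition nat_map (x : V) : V -> Prop :=
  epsilon (inhabits (fun _ : V => False)) (fun B => is_block B /\ B x).

Definition natural_map_qi : Prop :=
  (exists a b : R, 1 <= a /\ 0 <= b /\
     forall x y : V,
       / a * INR (d x y) - b <= INR (skel_dist (nat_map x) (nat_map y)) /\
       INR (skel_dist (nat_map x) (nat_map y)) <= a * INR (d x y) + b) /\
  (exists (g : (V -> Prop) -> V) (a b : R), 1 <= a /\ 0 <= b /\
     forall B B' : V -> Prop, is_block B -> is_block B' ->
       / a * INR (skel_dist B B') - b <= INR (d (g B) (g B')) /\
       INR (d (g B) (g B')) <= a * INR (skel_dist B B') + b).

Definition blocks_uniformly_bounded : Prop :=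
  exists D : R, forall B, is_block B ->
    forall x y, B x -> B y -> INR (d x y) <= D.

End Skeleton.

(* Main.v *)
Require Import Defs.
From Stdlib Require Import Reals Lra Lia ZArith ClassicalEpsilon Classical
  FunctionalExtensionality PropExtensionality.
Open Scope R_scope.

Lemma walk_app {T} (adj : T -> T -> Prop) n m x y z :
  walk adj n x y -> walk adj m y z -> walk adj (n + m) x z.
Proof. induction 1; intros; simpl; auto. econstructor; eauto. Qed.

Lemma walk_rev {T} (adj : T -> T -> Prop) (Hs : forall x y, adj x y -> adj y x) n x y :
  walk adj n x y -> walk adj n y x.
Proof.
  induction 1. constructor.
  replace (S n) with (n + 1)%nat by lia. eapply walk_app; eauto.
  econstructor; [apply Hs; eauto | constructor].
Qed.

Lemma ex_min (P : nat -> Prop) : (exists n, P n) -> exists n, P n /\ forall m, P m -> (n <= m)%nat.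
Proof.
  intros [n Hn]. apply NNPP; intro H.
  assert (A : forall k j, (j <= k)%nat -> ~ P j).
  { induction k; intros j Hj Pj; apply H; exists j; split; auto; intros m Pm;
      destruct (le_lt_dec j m); auto; exfalso; try lia.
    apply (IHk m); auto; lia. }
  apply (A n n); auto.
Qed.

Lemma gdist_spec {T} (adj : T -> T -> Prop) n x y : walk adj n x y ->
  walk adj (gdist adj x y) x y /\ forall m, walk adj m x y -> (gdist adj x y <= m)%nat.
Proof. intro. unfold gdist. apply epsilon_spec. apply ex_min. eauto. Qed.

Lemma gdist_le {T} (adj : T -> T -> Prop) n x y : walk adj n x y -> (gdist adj x y <= n)%nat.
Proof. intro H. apply (gdist_spec _ _ _ _ H); auto. Qed.

Lemma gdist_refl {T} (adj : T -> T -> Prop) x : gdist adj x x = 0%nat.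
Proof. assert (H := gdist_le adj 0 x x (walk0 _ x)). lia. Qed.

Lemma gdist_sym {T} (adj : T -> T -> Prop) (Hs : forall x y, adj x y -> adj y x)
  (Hc : connected_graph adj) x y : gdist adj x y = gdist adj y x.
Proof.
  destruct (Hc x y) as [n1 H1]. destruct (Hc y x) as [n2 H2].
  destruct (gdist_spec _ _ _ _ H1) as [W1 _]. destruct (gdist_spec _ _ _ _ H2) as [W2 _].
  apply Nat.le_antisymm; apply gdist_le; apply walk_rev; auto.
Qed.

Lemma kchain_mono {V} (adj : V -> V -> Prop) k (X Y : V -> Prop) a b :
  (forall z, X z -> Y z) -> kchain adj k X a b -> kchain adj k Y a b.
Proof. intros HXY; induction 1; econstructor; eauto. Qed.

Lemma kchain_app {V} (adj : V -> V -> Prop) k X a b c :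
  kchain adj k X a b -> kchain adj k X b c -> kchain adj k X a c.
Proof. induction 1; intros; auto. econstructor; eauto. Qed.

Lemma kchain_X1 {V} (adj : V -> V -> Prop) k X a b : kchain adj k X a b -> X a.
Proof. destruct 1; auto. Qed.
Lemma kchain_X2 {V} (adj : V -> V -> Prop) k X a b : kchain adj k X a b -> X b.
Proof. induction 1; auto. Qed.

Lemma kchain_rev {V} (adj : V -> V -> Prop) (Hs : forall x y, adj x y -> adj y x)
  (Hc : connected_graph adj) k X a b : kchain adj k X a b -> kchain adj k X b a.
Proof.
  induction 1. apply kchain0; assumption.
  apply kchain_app with z; [exact IHkchain|].
  apply kchainS with x; auto. rewrite (gdist_sym adj Hs Hc z x); assumption.
  apply kchain0; assumption.
Qed.

Lemma kchain_lift {V} (adj : V -> V -> Prop) k L x a b :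
  kchain adj k L x a -> kchain adj k L a b ->
  kchain adj k (fun z => L z /\ kchain adj k L x z) a b.
Proof.
  intros Hxa H; revert Hxa; induction H; intros Hxa.
  constructor; auto.
  assert (Hxz : kchain adj k L x z).
  { eapply kchain_app; eauto. econstructor; eauto. constructor; auto. }
  econstructor; eauto.
Qed.

Lemma layer_unique {V} (adj : V -> V -> Prop) x0 lam N N' x : 0 < lam ->
  layer adj x0 lam N x -> layer adj x0 lam N' x -> N = N'.
Proof.
  unfold layer; intros Hl [A B] [C D].
  destruct (Z.lt_trichotomy N N') as [H|[H|H]]; auto; exfalso.
  - assert (IZR N + 1 <= IZR N') by (rewrite <- plus_IZR; apply IZR_le; lia). nra.
  - assert (IZR N' + 1 <= IZR N) by (rewrite <- plus_IZR; apply IZR_le; lia). nra.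
Qed.

Lemma layer_exists {V} (adj : V -> V -> Prop) x0 lam x : 0 < lam ->
  exists N, layer adj x0 lam N x.
Proof.
  intros Hl. set (r := INR (gdist adj x x0) / lam).
  destruct (archimed (- r)) as [A B].
  exists (- up (- r))%Z. unfold layer. rewrite opp_IZR.
  assert (INR (gdist adj x x0) = r * lam) by (unfold r; field; lra).
  rewrite H. split; nra.
Qed.

Lemma block_unique {V} (adj : V -> V -> Prop) x0 lam k B B' x : 0 < lam ->
  is_block adj x0 lam k B -> is_block adj x0 lam k B' -> B x -> B' x -> B = B'.
Proof.
  intros Hl [_ [N [LB [KB MB]]]] [_ [N' [LB' [KB' MB']]]] Bx B'x.
  assert (N = N') by (eapply layer_unique; eauto). subst N'.
  assert (KU : k_connected adj k (fun z => B z \/ B' z)).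
  { intros u v Hu Hv.
    assert (Hux : kchain adj k (fun z => B z \/ B' z) u x).
    { destruct Hu.
      - eapply kchain_mono; [|apply KB; eauto]. auto.
      - eapply kchain_mono; [|apply KB'; eauto]. auto. }
    assert (Hxv : kchain adj k (fun z => B z \/ B' z) x v).
    { destruct Hv.
      - eapply kchain_mono; [|apply KB; eauto]. auto.
      - eapply kchain_mono; [|apply KB'; eauto]. auto. }
    eapply kchain_app; eauto. }
  assert (LU : forall z, B z \/ B' z -> layer adj x0 lam N z)
    by (intros z [H|H]; auto).
  apply functional_extensionality; intro z. apply propositional_extensionality.
  split; intro Hz.
  - apply (MB' (fun z => B z \/ B' z)); auto.
  - apply (MB (fun z => B z \/ B' z)); auto.
Qed.

Lemma block_exists {V} (adj : V -> V -> Prop) (Hs : forall x y, adj x y -> adj y x)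
  (Hc : connected_graph adj) x0 lam k x : 0 < lam ->
  exists B, is_block adj x0 lam k B /\ B x.
Proof.
  intros Hl. destruct (layer_exists adj x0 lam x Hl) as [N HN].
  set (L := layer adj x0 lam N).
  exists (fun z => L z /\ kchain adj k L x z).
  assert (Hxx : kchain adj k L x x) by (constructor; auto).
  split; [|split; auto].
  split; [exists x; split; auto|]. exists N. split; [intros z [H _]; auto|]. split.
  - intros u v [Lu Hu] [Lv Hv]. apply kchain_lift with (x := x); [exact Hu|].
    apply kchain_app with x; [apply kchain_rev; auto | exact Hv].
  - intros Y HY LY KY z Yz. split; [apply LY; exact Yz|].
    apply (kchain_mono adj k Y L); [exact LY|]. apply KY; [|exact Yz]. apply HY; split; [exact HN|exact Hxx].
Qed.

Lemma nat_map_spec {V} (adj : V -> V -> Prop) (Hs : forall x y, adj x y -> adj y x)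
  (Hc : connected_graph adj) x0 lam k x : 0 < lam ->
  is_block adj x0 lam k (nat_map adj x0 lam k x) /\ nat_map adj x0 lam k x x.
Proof.
  intro Hl. unfold nat_map. apply epsilon_spec. apply block_exists; auto.
Qed.

Lemma nat_map_block {V} (adj : V -> V -> Prop) (Hs : forall x y, adj x y -> adj y x)
  (Hc : connected_graph adj) x0 lam k B x : 0 < lam ->
  is_block adj x0 lam k B -> B x -> nat_map adj x0 lam k x = B.
Proof.
  intros Hl HB Bx. destruct (nat_map_spec adj Hs Hc x0 lam k x Hl).
  eapply block_unique; eauto.
Qed.

Lemma skel_walk {V} (adj : V -> V -> Prop) (Hs : forall x y, adj x y -> adj y x)
  (Hc : connected_graph adj) x0 lam k n x y : 0 < lam ->
  walk adj n x y -> exists m, (m <= n)%nat /\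
    walk (skel_adj adj x0 lam k) m (nat_map adj x0 lam k x) (nat_map adj x0 lam k y).
Proof.
  intros Hl H; induction H.
  - exists 0%nat; split; auto; constructor.
  - destruct IHwalk as [m [Hm W]].
    destruct (classic (nat_map adj x0 lam k x = nat_map adj x0 lam k z)) as [E|E].
    + exists m; split; [lia|]. rewrite E; auto.
    + exists (S m); split; [lia|]. apply walkS with (nat_map adj x0 lam k z); [|exact W].
      destruct (nat_map_spec adj Hs Hc x0 lam k x Hl).
      destruct (nat_map_spec adj Hs Hc x0 lam k z Hl).
      split; [auto|split;[auto|split;[exact E|exists x, z; auto]]].
Qed.

Lemma skel_back {V} (adj : V -> V -> Prop) (Hs : forall x y, adj x y -> adj y x)
  (Hc : connected_graph adj) x0 lam k (Dn : nat)
  (HD : forall B, is_block adj x0 lam k B -> forall x y, B x -> B y -> (gdist adj x y <= Dn)%nat)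
  m B B' : walk (skel_adj adj x0 lam k) m B B' -> is_block adj x0 lam k B' ->
  forall x y, B x -> B' y -> exists n, (n <= (Dn + 1) * m + Dn)%nat /\ walk adj n x y.
Proof.
  induction 1; intros HB' u v Bu Bv.
  - destruct (Hc u v) as [n W]. destruct (gdist_spec _ _ _ _ W) as [W' _].
    exists (gdist adj u v); split; auto. specialize (HD x HB' u v Bu Bv). lia.
  - destruct H as [HBx [HBz [_ [a [b [xa [zb ab]]]]]]].
    destruct (IHwalk HB' b v zb Bv) as [n1 [Hn1 W1]].
    destruct (Hc u a) as [n0 W]. destruct (gdist_spec _ _ _ _ W) as [W' _].
    exists (gdist adj u a + (1 + n1))%nat. split.
    + specialize (HD x HBx u a Bu xa). nia.
    + eapply walk_app; eauto. econstructor; eauto.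
Qed.

Theorem lemma3 (V : Type) (adj : V -> V -> Prop) (x0 : V) (lam : R) (k : nat) :
  (forall x y, adj x y -> adj y x) ->
  (forall x, ~ adj x x) ->
  connected_graph adj ->
  1 <= lam ->
  (1 <= k)%nat ->
  (natural_map_qi adj x0 lam k <-> blocks_uniformly_bounded adj x0 lam k).
Proof.
  intros Hs Hirr Hc Hlam Hk. assert (Hl : 0 < lam) by lra.
  split.
  - intros [[a [b [Ha [Hb H]]]] _]. exists (a * b).
    intros B HB x y Bx By.
    destruct (H x y) as [H1 _].
    rewrite (nat_map_block adj Hs Hc x0 lam k B x Hl HB Bx) in H1.
    rewrite (nat_map_block adj Hs Hc x0 lam k B y Hl HB By) in H1.
    unfold skel_dist in H1. rewrite gdist_refl in H1. simpl in H1.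
    assert (0 < / a) by (apply Rinv_0_lt_compat; lra).
    assert (E : INR (gdist adj x y) = a * (/ a * INR (gdist adj x y))) by (field; lra).
    rewrite E. nra.
  - intros [D HD].
    destruct (INR_unbounded D) as [Dn HDn].
    assert (HDn' : forall B, is_block adj x0 lam k B -> forall x y, B x -> B y ->
               (gdist adj x y <= Dn)%nat).
    { intros B HB x y Bx By. specialize (HD B HB x y Bx By).
      apply INR_le. lra. }
    assert (KEY : forall x y,
      (skel_dist adj x0 lam k (nat_map adj x0 lam k x) (nat_map adj x0 lam k y)
         <= gdist adj x y)%nat /\
      (gdist adj x y <= (Dn + 1) * skel_dist adj x0 lam k (nat_map adj x0 lam k x)
          (nat_map adj x0 lam k y) + Dn)%nat).
    { intros x y. destruct (Hc x y) as [n W]. destruct (gdist_spec _ _ _ _ W) as [W' Wm].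
      destruct (skel_walk adj Hs Hc x0 lam k _ _ _ Hl W') as [m [Hm SW]].
      destruct (gdist_spec _ _ _ _ SW) as [SW' SWm].
      split.
      + unfold skel_dist. specialize (SWm m SW). lia.
      + destruct (nat_map_spec adj Hs Hc x0 lam k x Hl) as [Bx Bxx].
        destruct (nat_map_spec adj Hs Hc x0 lam k y Hl) as [By Byy].
        destruct (skel_back adj Hs Hc x0 lam k Dn HDn' _ _ _ SW' By x y Bxx Byy)
          as [n' [Hn' W2]].
        specialize (Wm n' W2). unfold skel_dist. lia. }
    assert (REAL : forall x y,
      / (INR Dn + 1) * INR (gdist adj x y) - INR Dn <=
        INR (skel_dist adj x0 lam k (nat_map adj x0 lam k x) (nat_map adj x0 lam k y)) /\
      INR (skel_dist adj x0 lam k (nat_map adj x0 lam k x) (nat_map adj x0 lam k y)) <=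
        (INR Dn + 1) * INR (gdist adj x y) + INR Dn).
    { intros x y. destruct (KEY x y) as [K1 K2].
      set (s := skel_dist adj x0 lam k (nat_map adj x0 lam k x) (nat_map adj x0 lam k y)) in *.
      apply le_INR in K1. apply le_INR in K2.
      rewrite plus_INR, mult_INR, plus_INR in K2. simpl in K2.
      assert (P0 : 0 <= INR Dn) by apply pos_INR.
      assert (P1 : 0 <= INR s) by apply pos_INR.
      assert (P2 : 0 <= INR (gdist adj x y)) by apply pos_INR.
      split.
      + assert (Hia : / (INR Dn + 1) * (INR Dn + 1) = 1) by (field; lra).
        assert (Hi0 : 0 < / (INR Dn + 1)) by (apply Rinv_0_lt_compat; lra).
        assert (Hi1 : / (INR Dn + 1) <= 1) by (rewrite <- Rinv_1; apply Rinv_le_contravar; lra).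
        assert (T1 : / (INR Dn + 1) * INR (gdist adj x y) <=
                     / (INR Dn + 1) * ((INR Dn + 1) * INR s + INR Dn))
          by (apply Rmult_le_compat_l; lra).
        assert (T2 : / (INR Dn + 1) * INR Dn <= INR Dn) by nra.
        nra.
      + nra. }
    split.
    + exists (INR Dn + 1), (INR Dn). split; [pose proof (pos_INR Dn); lra|].
      split; [apply pos_INR|]. exact REAL.
    + exists (fun B => epsilon (inhabits x0) (fun x => B x)), (INR Dn + 1), (INR Dn).
      split; [pose proof (pos_INR Dn); lra|]. split; [apply pos_INR|].
      intros B B' HB HB'. simpl.
      assert (Hg : forall C, is_block adj x0 lam k C ->
                 C (epsilon (inhabits x0) (fun x => C x))).
      { intros C [[z Cz] _]. apply epsilon_spec. eauto. }
      set (u := epsilon (inhabits x0) (fun x => B x)).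
      set (v := epsilon (inhabits x0) (fun x => B' x)).
      rewrite <- (nat_map_block adj Hs Hc x0 lam k B u Hl HB (Hg B HB)).
      rewrite <- (nat_map_block adj Hs Hc x0 lam k B' v Hl HB' (Hg B' HB')).
      destruct (KEY u v) as [K1 K2].
      set (s := skel_dist adj x0 lam k (nat_map adj x0 lam k u) (nat_map adj x0 lam k v)) in *.
      apply le_INR in K1. apply le_INR in K2.
      rewrite plus_INR, mult_INR, plus_INR in K2. simpl in K2.
      assert (P0 : 0 <= INR Dn) by apply pos_INR.
      assert (P1 : 0 <= INR s) by apply pos_INR.
      assert (Hi0 : 0 < / (INR Dn + 1)) by (apply Rinv_0_lt_compat; lra).
      assert (Hi1 : / (INR Dn + 1) <= 1) by (rewrite <- Rinv_1; apply Rinv_le_contravar; lra).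
      split; nra.
Qed.
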